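(* Let $C=xe_0B_1e_1B_2\cdots B_ke_ky$ be a subcubic chain with chain-blocks $(\overline{B_i},\bar e_i)$, $i\in[k]$, and assume $\delta(\overline{B_i},\bar e_i)+\widehat\delta(\overline{B_i},\bar e_i)\le 0$ for all $i\in[k]$. Then $\delta(\overline C,e_C)+\widehat\delta(\overline C,e_C)\le 0$, with equality if and only if $\delta(\overline{B_i},\bar e_i)+\widehat\delta(\overline{B_i},\bar e_i)=0$ for all $i\in[k]$.
   Context: Graphs are finite and may have loops and parallel edges unless called simple; a loop contributes 2 to the degree of its vertex, and a graph is subcubic if every vertex has degree at most 3. $n(G)$ is the number of vertices of $G$ and $n_2(G)$ the number of vertices of degree 2. A cycle is a connected 2-regular subgraph (so a loop, or a pair of parallel edges, forms a cycle). An even cover of $G$ is a spanning subgraph $F$ in which every vertex has degree 0 or 2; its excess is $\mathrm{exc}(F)=2c(F)+i(F)$, where $c(F)$ is the number of cycles and $i(F)$ the number of isolated vertices of $F$. For $e\in E(G)$, let $\mathcal E(G,e)$ (resp. $\widehat{\mathcal E}(G,e)$) be the set of even covers of $G$ containing (resp. not containing) $e$, and define $\mathrm{exc}(G,e)=\min_{F\in\mathcal E(G,e)}\mathrm{exc}(F)-2$, $\widehat{\mathrm{exc}}(G,e)=\min_{F\in\widehat{\mathcal E}(G,e)}\mathrm{exc}(F)$, $\delta(G,e)=\mathrm{exc}(G,e)-\frac{n(G)+n_2(G)}4$, $\widehat\delta(G,e)=\widehat{\mathrm{exc}}(G,e)-\frac{n(G)+n_2(G)}4$. A subcubic chain is a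 simple connected subcubic graph $C$ written as an alternating sequence $C=x e_0 B_1 e_1 B_2\cdots B_k e_k y$ ($k\ge 0$) such that: $\{e_0,\dots,e_k\}$ is exactly the set of cut-edges of $C$; the connected components of $C-\{e_0,\dots,e_k\}$ are $B_0,B_1,\dots,B_{k+1}$ with $V(B_0)=\{x\}$, $V(B_{k+1})=\{y\}$; each $B_i$ ($1\le i\le k$) is a single vertex or 2-connected; and $e_i$ joins a vertex of $B_i$ to a vertex of $B_{i+1}$ ($0\le i\le k$). Its endpoints are $x,y$ and its end edges are $e_0,e_k$. It is trivial if $k=0$. If $k\ge1$, let $x_i$ (resp. $y_i$) be the endpoint of $e_{i-1}$ (resp. $e_i$) in $B_i$; the chain-blocks of $C$ are the pairs $(\overline{B_i},\bar e_i)$, $i\in[k]$, where $\overline{B_i}$ is $B_i$ plus a new edge $\bar e_i=x_iy_i$ (a loop if $B_i$ is a single vertex), and the closure of $C$ is $(\overline C,e_C)$ where $\overline C$ is obtained from $C-\{x,y\}$ by adding a new edge $e_C=x_1y_k$. If $C$ is trivial we set $\mathrm{exc}(\overline C,e_C)=\widehat{\mathrm{exc}}(\overline C,e_C)=\delta(\overline C,e_C)=\widehat\delta(\overline C,e_C)=0$. *)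

(* Defs.v *)
From mathcomp Require Import all_boot all_order all_algebra.
Set Implicit Arguments. Unset Strict Implicit. Unset Printing Implicit Defensive.
Import Order.TTheory GRing.Theory Num.Theory.

(* Finite multigraphs (loops and parallel edges allowed).                     *)
Record mgraph (V E : finType) := MGraph {
  mV : {set V};
  mE : {set E};
  mends : E -> V * V }.

Section Graphs.
Variables V E : finType.
Implicit Types (G : mgraph V E) (W : {set V}) (F : {set E}).

Definition wf_graph G : bool :=
  [forall f in mE G, ((mends G f).1 \in mV G) && ((mends G f).2 \in mV G)].

(* degree: a loop contributes 2 *)
Definition deg G (v : V) : nat :=
  #|[set f in mE G | (mends G f).1 == v]| + #|[set f in mE G | (mends G f).2 == v]|.

Definition n_ G : nat := #|mV G|.
Definition n2_ G : nat := #|[set v in mV G | deg G v == 2]|.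

Definition subcubic G : bool := [forall v in mV G, deg G v <= 3].

Definition simple_graph G : bool :=
  [forall f in mE G, (mends G f).1 != (mends G f).2] &&
  [forall f in mE G, forall g in mE G,
     ((mends G f == mends G g) ||
      (mends G f == ((mends G g).2, (mends G g).1))) ==> (f == g)].

Definition adj G : rel V := fun u v =>
  [exists f in mE G, (mends G f == (u, v)) || (mends G f == (v, u))].

Definition comps G : {set {set V}} :=
  [set [set w in mV G | connect (adj G) v w] | v in mV G].

Definition ncomp G : nat := #|comps G|.
Definition connected G : bool := ncomp G == 1.

Definition induced G W : mgraph V E :=
  MGraph W [set f in mE G | ((mends G f).1 \in W) && ((mends G f).2 \in W)] (mends G).
Definition del_edges G F : mgraph V E := MGraph (mV G) (mE G :\: F) (mends G).
Definition span_sub G F : mgraph V E := MGraph (mV G) F (mends G).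

Definition cut_edge G (f : E) : bool :=
  (f \in mE G) && (ncomp G < ncomp (del_edges G [set f])).

Definition two_connected G : bool :=
  (2 < #|mV G|) && connected G &&
  [forall v in mV G, connected (induced G (mV G :\ v))].

Definition even_cover G F : bool :=
  (F \subset mE G) &&
  [forall v in mV G, (deg (span_sub G F) v == 0) || (deg (span_sub G F) v == 2)].

Definition ncycles G F : nat :=
  #|[set K in comps (span_sub G F) | [exists v in K, deg (span_sub G F) v != 0]]|.
Definition nisolated G F : nat :=
  #|[set v in mV G | deg (span_sub G F) v == 0]|.
Definition excF G F : nat := 2 * ncycles G F + nisolated G F.

(* minimum of excF over the even covers satisfying P
   (0 if there is none; never used in that case) *)
Definition excmin G (P : pred {set E}) : nat :=
  match [pick F | even_cover G F && P F] with
  | None => 0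
  | Some F0 => \big[minn/excF G F0]_(F | even_cover G F && P F) excF G F
  end.

Definition exc_e G (e : E) : int := ((excmin G (fun F => e \in F))%:Z - 2)%R.
Definition exchat_e G (e : E) : int := (excmin G (fun F => e \notin F))%:Z.

Definition delta G (e : E) : rat :=
  ((exc_e G e)%:~R - (n_ G + n2_ G)%:R / 4%:R)%R.
Definition deltahat G (e : E) : rat :=
  ((exchat_e G e)%:~R - (n_ G + n2_ G)%:R / 4%:R)%R.

End Graphs.

(* es i = e_i (0 <= i <= k), Bs i = V(B_i) (0 <= i <= k+1).                   *)
Section Chains.
Variables V E : finType.
Implicit Types (C : mgraph V E).

Definition joins C (f : E) (A B : {set V}) : bool :=
  (((mends C f).1 \in A) && ((mends C f).2 \in B)) ||
  (((mends C f).2 \in A) && ((mends C f).1 \in B)).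

Definition endin C (A : {set V}) (f : E) : V :=
  if (mends C f).1 \in A then (mends C f).1 else (mends C f).2.

Definition chain_edges (k : nat) (es : nat -> E) : {set E} :=
  [set es (nat_of_ord i) | i : 'I_k.+1].

Definition subcubic_chain C (k : nat) (x y : V) (es : nat -> E)
    (Bs : nat -> {set V}) : Prop :=
  [/\ wf_graph C, simple_graph C, connected C & subcubic C] /\
  [/\ [set f | cut_edge C f] = chain_edges k es,
      comps (del_edges C (chain_edges k es)) = [set Bs (nat_of_ord i) | i : 'I_k.+2]
      /\ (forall i j, i <= k.+1 -> j <= k.+1 -> Bs i = Bs j -> i = j),
      Bs 0 = [set x] /\ Bs k.+1 = [set y],
      (forall i, 1 <= i <= k ->
         (#|Bs i| == 1) || two_connected (induced (del_edges C (chain_edges k es)) (Bs i)))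
    & (forall i, i <= k -> joins C (es i) (Bs i) (Bs i.+1))].

Definition chain_B C (k : nat) (es : nat -> E) (Bs : nat -> {set V}) (i : nat) : mgraph V E :=
  induced (del_edges C (chain_edges k es)) (Bs i).

(* chain-block (bar B_i, bar e_i): edge type option E, bar e_i = None,
   joining x_i = end of e_{i-1} in B_i and y_i = end of e_i in B_i *)
Definition chain_block C k (es : nat -> E) (Bs : nat -> {set V}) (i : nat)
    : mgraph V (option E) :=
  let B := chain_B C k es Bs i in
  MGraph (mV B) (None |: [set Some f | f in mE B])
    (fun o => match o with
              | Some f => mends C f
              | None => (endin C (Bs i) (es i.-1), endin C (Bs i) (es i))
              end).

(* closure (bar C, e_C): C - {x,y} plus the new edge e_C = None = x_1 y_k *)
Definition chain_closure C k x y (es : nat -> E) (Bs : nat -> {set V})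
    : mgraph V (option E) :=
  let D := induced C (mV C :\ x :\ y) in
  MGraph (mV D) (None |: [set Some f | f in mE D])
    (fun o => match o with
              | Some f => mends C f
              | None => (endin C (Bs 1) (es 0), endin C (Bs k) (es k))
              end).

(* delta + deltahat of a chain-block, and of the closure (0 if C trivial) *)
Definition block_dsum C (k : nat) (es : nat -> E) (Bs : nat -> {set V}) (i : nat) : rat :=
  (delta (chain_block C k es Bs i) None + deltahat (chain_block C k es Bs i) None)%R.

Definition closure_dsum C (k : nat) (x y : V) (es : nat -> E) (Bs : nat -> {set V}) : rat :=
  (if k == 0 then 0
  else delta (chain_closure C k x y es Bs) None
       + deltahat (chain_closure C k x y es Bs) None)%R.

End Chains.

(* Main.v *)
Require Import Defs.
From mathcomp Require Import all_boot all_order all_algebra.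
Import Order.TTheory GRing.Theory Num.Theory.
From mathcomp Require Import zify lra.
Set Implicit Arguments. Unset Strict Implicit. Unset Printing Implicit Defensive.

Lemma big_opt (E : finType) (F : option E -> nat) :
  (\sum_(o : option E) F o = F None + \sum_(f : E) F (Some f))%N.
Proof.
rewrite (bigD1 None) //=; congr (_ + _)%N.
case: (pickP E) => [f0 _|E0].
  rewrite [LHS](reindex_onto Some (fun o => odflt f0 o)) /=; last by case.
  by apply: eq_bigl => f; rewrite eqxx.
by rewrite !big_pred0 // => [[f|]] //=; have := E0 f.
Qed.

Lemma card_setsum (T : finType) (A : {set T}) (P : pred T) :
  #|[set f in A | P f]| = \sum_(f : T) ((f \in A) && P f).
Proof.
rewrite -sum1_card big_mkcond /=; apply: eq_bigr => f _.
by rewrite !inE; case: (_ && _).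
Qed.

Lemma conn_stay (T : finType) (e : rel T) (S : pred T) a b :
  (forall u v, S u -> e u v -> S v) -> S a -> connect e a b -> S b.
Proof.
move=> HS Sa /connectP [p]; elim: p a Sa => [|c p IH] a Sa /=.
  by move=> _ ->.
by case/andP => eac pc lb; exact: (IH c (HS _ _ Sa eac) pc lb).
Qed.

Lemma conn_mono (T : finType) (e1 e2 : rel T) (S : pred T) a b :
  (forall u v, S u -> e1 u v -> S v /\ connect e2 u v) -> S a ->
  connect e1 a b -> connect e2 a b.
Proof.
move=> HS Sa /connectP [p]; elim: p a Sa => [|c p IH] a Sa /=.
  by move=> _ ->.
case/andP => eac pc lb; have [Sc ac] := HS _ _ Sa eac.
exact: (connect_trans ac (IH c Sc pc lb)).
Qed.

Lemma conn_stayP (T : finType) (e : rel T) (S : T -> Prop) a b :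
  (forall u v, S u -> e u v -> S v) -> S a -> connect e a b -> S b.
Proof.
move=> HS Sa /connectP [p]; elim: p a Sa => [|c p IH] a Sa /=.
  by move=> _ ->.
by case/andP => eac pc lb; exact: (IH c (HS _ _ Sa eac) pc lb).
Qed.

Lemma conn_monoP (T : finType) (e1 e2 : rel T) (S : T -> Prop) a b :
  (forall u v, S u -> e1 u v -> S v /\ connect e2 u v) -> S a ->
  connect e1 a b -> connect e2 a b.
Proof.
move=> HS Sa /connectP [p]; elim: p a Sa => [|c p IH] a Sa /=.
  by move=> _ ->.
case/andP => eac pc lb; have [Sc ac] := HS _ _ Sa eac.
exact: (connect_trans ac (IH c Sc pc lb)).
Qed.

Section Generic.
Variables V T : finType.
Implicit Types (G : mgraph V T) (F : {set T}).

Definition cnt G (o : T) (v : V) : nat :=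
  (((mends G o).1 == v) + ((mends G o).2 == v))%N.

Lemma degE G F v : deg (span_sub G F) v = \sum_o (o \in F) * cnt G o v.
Proof.
rewrite /deg /= !card_setsum -big_split /=; apply: eq_bigr => o _.
by rewrite /cnt; case: (o \in F); rewrite ?mul1n ?mul0n.
Qed.

Lemma degE0 G v : deg G v = \sum_o (o \in mE G) * cnt G o v.
Proof. exact: (degE G (mE G) v). Qed.

Lemma adj_sym G : symmetric (adj G).
Proof.
move=> u v; apply/existsP/existsP => -[f /andP [Hf H]]; exists f;
  by rewrite Hf orbC.
Qed.

Lemma adjP G u v : reflect (exists2 f, f \in mE G &
   (mends G f = (u, v) \/ mends G f = (v, u))) (adj G u v).
Proof.
apply: (iffP existsP) => [[f /andP [Hf /orP [/eqP H|/eqP H]]]|[f Hf [H|H]]];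
  exists f => //; [by left|by right| | ]; by rewrite Hf H eqxx ?orbT.
Qed.

Definition cls G v := [set w in mV G | connect (adj G) v w].

Lemma clsE G v w : (w \in cls G v) = (w \in mV G) && connect (adj G) v w.
Proof. by rewrite inE. Qed.

Lemma cls_eq G u w : w \in cls G u -> cls G w = cls G u.
Proof.
rewrite inE => /andP [_ Huw]; apply/setP => z; rewrite !inE.
by rewrite (same_connect (sym_connect_sym (@adj_sym G)) Huw).
Qed.

Lemma cls_self G v : v \in mV G -> v \in cls G v.
Proof. by move=> Hv; rewrite inE Hv connect0. Qed.

Lemma cls_sub G v : cls G v \subset mV G.
Proof. by apply/subsetP => w; rewrite inE => /andP []. Qed.

Lemma ncyclesE G F : ncycles G F =
  #|cls (span_sub G F) @: [set v in mV G | deg (span_sub G F) v != 0]|.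
Proof.
rewrite /ncycles; apply: eq_card => K; rewrite inE.
apply/andP/imsetP => [[/imsetP [u Hu ->] /existsP [v /andP [Hv Hd]]]|[v]].
  exists v; first by rewrite inE Hd andbT; move/subsetP: (cls_sub (span_sub G F) u); apply.
  by rewrite (cls_eq Hv).
rewrite inE => /andP [Hv Hd] ->; split; first by apply/imsetP; exists v.
by apply/existsP; exists v; rewrite Hd andbT cls_self.
Qed.

Lemma evP G F : even_cover G F -> F \subset mE G /\
  (forall v, v \in mV G -> (deg (span_sub G F) v == 0) || (deg (span_sub G F) v == 2)).
Proof. by case/andP => H1 /forallP H2; split => // v Hv; have := H2 v; rewrite Hv. Qed.

Lemma evI G F : F \subset mE G ->
  (forall v, v \in mV G -> (deg (span_sub G F) v == 0) || (deg (span_sub G F) v == 2)) ->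
  even_cover G F.
Proof. by move=> H1 H2; rewrite /even_cover H1; apply/forallP => v; apply/implyP; apply: H2. Qed.

Lemma ev_odd G F v : even_cover G F -> v \in mV G -> ~~ odd (deg (span_sub G F) v).
Proof. by case/evP => _ H /H /orP [] /eqP ->. Qed.

Lemma wf_span G F : wf_graph G -> F \subset mE G -> wf_graph (span_sub G F).
Proof.
move=> /forallP H HF; apply/forallP => f; apply/implyP => Hf.
by have := H f; rewrite (subsetP HF _ Hf).
Qed.

Lemma adj_span G F a b : F \subset mE G -> adj (span_sub G F) a b -> adj G a b.
Proof.
move=> HF /adjP [f Hf Hm]; apply/adjP; exists f => //; exact: (subsetP HF).
Qed.

Lemma deg_sub G F1 F2 v : F1 \subset F2 -> deg (span_sub G F1) v <= deg (span_sub G F2) v.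
Proof.
move=> H; rewrite !degE; apply: leq_sum => o _.
by case H1: (o \in F1); rewrite ?(subsetP H _ H1) // mul0n.
Qed.

Lemma degE' G F v : deg (span_sub G F) v = \sum_(o in F) cnt G o v.
Proof.
rewrite degE [RHS]big_mkcond; apply: eq_bigr => o _.
by case: (o \in F); rewrite ?mul1n ?mul0n.
Qed.

Lemma deg_toggle G F o v :
  odd (deg (span_sub G (if o \in F then F :\ o else o |: F)) v) =
  odd (deg (span_sub G F) v) (+) odd (cnt G o v).
Proof.
case: ifP => Ho.
  rewrite [in RHS]degE' (big_setD1 _ Ho) -degE' (oddD (cnt G o v)).
  by case: (odd (cnt G o v)); case: (odd (deg (span_sub G (F :\ o)) v)).
by rewrite degE' big_setU1 ?Ho // -degE' (oddD (cnt G o v)) addbC.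
Qed.

End Generic.

Lemma sum_eq1 (V : finType) (a : V) (S : {set V}) :
  \sum_(v in S) (a == v) = (a \in S).
Proof.
case: (boolP (a \in S)) => H.
  rewrite (bigD1 a) //= eqxx big1 // => v /andP [_ /negPf].
  by rewrite eq_sym => ->.
rewrite big1 // => v Hv; case: eqP => // E; by rewrite E Hv in H.
Qed.

Lemma odd_sum (I : Type) (r : seq I) (P : pred I) (g : I -> nat) :
  odd (\sum_(i <- r | P i) g i) = \big[addb/false]_(i <- r | P i) odd (g i).
Proof. by apply: (big_morph odd oddD). Qed.

Lemma par_even (V T : finType) (G : mgraph V T) (F : {set T}) (S : {set V}) :
  (forall v, v \in S -> ~~ odd (deg (span_sub G F) v)) ->
  ~~ odd #|[set o in F | ((mends G o).1 \in S) (+) ((mends G o).2 \in S)]|.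
Proof.
move=> Hev.
have key : \sum_(v in S) deg (span_sub G F) v =
   \sum_o (o \in F) * (((mends G o).1 \in S) + ((mends G o).2 \in S)).
  rewrite (eq_bigr (fun v => \sum_o (o \in F) * cnt G o v)); last by move=> v _; rewrite degE.
  rewrite exchange_big /=; apply: eq_bigr => o _.
  by rewrite -big_distrr /= /cnt big_split /= !sum_eq1.
have H : ~~ odd (\sum_(v in S) deg (span_sub G F) v).
  rewrite odd_sum; apply: (big_ind (fun b : bool => ~~ b)) => //.
  by move=> a b; case: a; case: b.
suff -> : odd #|[set o in F | ((mends G o).1 \in S) (+) ((mends G o).2 \in S)]|
    = odd (\sum_(v in S) deg (span_sub G F) v) by [].
rewrite key (card_setsum F (fun o => ((mends G o).1 \in S) (+) ((mends G o).2 \in S))) !odd_sum; apply: eq_bigr => o _.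
by case: (o \in F); case: (_ \in S); case: (_ \in S).
Qed.

Section Min.
Variables V T : finType.
Implicit Types (G : mgraph V T) (F : {set T}).

Lemma excmin_le G (P : pred {set T}) F :
  even_cover G F -> P F -> excmin G P <= excF G F.
Proof.
move=> H1 H2; rewrite /excmin; case: pickP => [F1 HF1|H0].
  rewrite -minEnat.
  have := @Order.TotalTheory.bigmin_le_cond _ nat _ (excF G F1) F (fun F => even_cover G F && P F) (excF G).
  by rewrite H1 H2 => /(_ isT).
by have := H0 F; rewrite H1 H2.
Qed.

Lemma excmin_ex G (P : pred {set T}) F0 :
  even_cover G F0 -> P F0 ->
  exists2 F, even_cover G F && P F & excmin G P = excF G F.
Proof.
move=> H1 H2; rewrite /excmin; case: pickP => [F1 HF1|H0]; last first.
  by have := H0 F0; rewrite H1 H2.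
apply: (big_ind (fun m => exists2 F, even_cover G F && P F & m = excF G F)).
- by exists F1.
- move=> a b [Fa Ha ->] [Fb Hb ->]; rewrite /minn; case: ifP => _.
    by exists Fa. by exists Fb.
- by move=> F HF; exists F.
Qed.
Lemma eq_excmin G (P Q : pred {set T}) : P =1 Q -> excmin G P = excmin G Q.
Proof.
move=> E; rewrite /excmin.
have E' : (fun F => even_cover G F && P F) =1 (fun F => even_cover G F && Q F).
  by move=> F; rewrite E.
rewrite (eq_pick E'); case: pickP => // F0 _; apply: eq_bigl => F; by rewrite E.
Qed.
End Min.

Lemma optS (E : finType) (A : {set E}) f :
  (Some f \in None |: [set Some g | g in A]) = (f \in A).
Proof.
rewrite !inE /=; apply/imsetP/idP => [[g Hg [->]]|Hf] //; by exists f.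
Qed.
Lemma optN (E : finType) (A : {set E}) : None \in None |: [set Some g | g in A].
Proof. by rewrite !inE eqxx. Qed.

Section Chain.
Variables (V E : finType) (C : mgraph V E) (k : nat) (x y : V)
  (es : nat -> E) (Bs : nat -> {set V}).
Hypothesis Hch : subcubic_chain C k x y es Bs.
Hypothesis kpos : 0 < k.

Definition chE := chain_edges k es.
Definition Cdel := del_edges C chE.
Definition blk i := mE (chain_B C k es Bs i).
Definition Hb i := chain_block C k es Bs i.
Definition Gc := chain_closure C k x y es Bs.
Definition xb i := endin C (Bs i) (es i.-1).
Definition yb i := endin C (Bs i) (es i).

Lemma wfC : wf_graph C. Proof. by case: Hch => [[]]. Qed.
Lemma subcC : subcubic C. Proof. by case: Hch => [[]]. Qed.
Lemma cutE : [set f | cut_edge C f] = chE. Proof. by case: Hch => _ [H _ _ _ _]. Qed.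
Lemma compsE : comps Cdel = [set Bs (nat_of_ord i) | i : 'I_k.+2].
Proof. by case: Hch => _ [_ [H _] _ _ _]. Qed.
Lemma Binj i j : i <= k.+1 -> j <= k.+1 -> Bs i = Bs j -> i = j.
Proof. by case: Hch => _ [_ [_ H] _ _ _]; apply: H. Qed.
Lemma B0 : Bs 0 = [set x]. Proof. by case: Hch => _ [_ _ [H _] _ _]. Qed.
Lemma Bk1 : Bs k.+1 = [set y]. Proof. by case: Hch => _ [_ _ [_ H] _ _]. Qed.
Lemma joinsE i : i <= k -> joins C (es i) (Bs i) (Bs i.+1).
Proof. by case: Hch => _ [_ _ _ _ H]; apply: H. Qed.

Lemma wf_end f : f \in mE C -> (mends C f).1 \in mV C /\ (mends C f).2 \in mV C.
Proof.
move=> Hf; have /forallP /(_ f) := wfC.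
by rewrite Hf /= => /andP [].
Qed.

Lemma Bcomp j : j <= k.+1 -> Bs j \in comps Cdel.
Proof.
move=> Hj; rewrite compsE; apply/imsetP.
by exists (Ordinal (n:=k.+2) (m:=j) Hj).
Qed.

Lemma BsE j : j <= k.+1 -> exists2 a, a \in mV C & Bs j = cls Cdel a.
Proof. by move/Bcomp/imsetP => [a Ha ->]; exists a. Qed.

Lemma Bsub j : j <= k.+1 -> Bs j \subset mV C.
Proof. by case/BsE => a _ ->; exact: cls_sub. Qed.

Lemma Bcls j w : j <= k.+1 -> w \in Bs j -> Bs j = cls Cdel w.
Proof. by case/BsE => a _ -> Hw; rewrite (cls_eq Hw). Qed.

Lemma Bdisj i j v : i <= k.+1 -> j <= k.+1 -> v \in Bs i -> v \in Bs j -> i = j.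
Proof.
move=> Hi Hj Hvi Hvj; apply: Binj => //.
by rewrite (Bcls Hi Hvi) (Bcls Hj Hvj).
Qed.

Lemma neB i j a b : i <= k.+1 -> j <= k.+1 -> i != j -> a \in Bs i -> b \in Bs j ->
  (a == b) = false.
Proof.
move=> Hi Hj Hij Ha Hb; apply/negP => /eqP E1; subst b.
by move: Hij; rewrite (Bdisj Hi Hj Ha Hb) eqxx.
Qed.

Lemma notinB i j a : i <= k.+1 -> j <= k.+1 -> i != j -> a \in Bs i -> (a \in Bs j) = false.
Proof.
move=> Hi Hj Hij Ha; apply/negP => Hb.
by move: Hij; rewrite (Bdisj Hi Hj Ha Hb) eqxx.
Qed.

Lemma Bcover v : v \in mV C -> exists2 j, j <= k.+1 & v \in Bs j.
Proof.
move=> Hv; have : cls Cdel v \in comps Cdel by apply/imsetP; exists v.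
rewrite compsE => /imsetP [j _ Ej]; exists j; first by have := ltn_ord j.
by rewrite -Ej; apply: cls_self.
Qed.

Lemma adj_mV (T : finType) (G' : mgraph V T) (u v : V) : wf_graph G' -> adj G' u v -> v \in mV G'.
Proof.
move=> Hwf /adjP [f Hf Hm]; have /forallP /(_ f) := Hwf.
by rewrite Hf /=; case: Hm => ->; case/andP.
Qed.

Lemma wfCdel : wf_graph Cdel.
Proof.
apply/forallP => f; apply/implyP; rewrite /Cdel /= inE => /andP [_ Hf].
by have [? ?] := wf_end Hf; apply/andP.
Qed.

Lemma Bclosed j a b : j <= k.+1 -> a \in Bs j -> connect (adj Cdel) a b -> b \in Bs j.
Proof.
move=> Hj Ha Hc; rewrite (Bcls Hj Ha) inE Hc andbT.
have Hsub := subsetP (Bsub Hj).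
apply: (conn_stay (S := fun w => w \in mV C)) Hc => //; last by apply: Hsub.
by move=> u w _ /(adj_mV wfCdel).
Qed.

Lemma es_chain j : j <= k -> es j \in chE.
Proof. by move=> Hj; apply/imsetP; exists (Ordinal (n:=k.+1) (m:=j) Hj). Qed.

Lemma es_mE j : j <= k -> es j \in mE C.
Proof.
move/es_chain; rewrite -cutE inE => /andP [] //.
Qed.

Lemma chE_es f : f \in chE -> exists2 j, j <= k & f = es j.
Proof. by case/imsetP => j _ ->; exists j => //; have := ltn_ord j. Qed.

Lemma es_ends j : j <= k ->
  ((mends C (es j)).1 \in Bs j /\ (mends C (es j)).2 \in Bs j.+1) \/
  ((mends C (es j)).2 \in Bs j /\ (mends C (es j)).1 \in Bs j.+1).
Proof.
move/joinsE; rewrite /joins => /orP [/andP [h1 h2]|/andP [h1 h2]]; by [left|right].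
Qed.

Definition cntC f v := cnt C f v.

Lemma cnt_es_j j v : j <= k -> v \in Bs j -> cnt C (es j) v = (endin C (Bs j) (es j) == v).
Proof.
move=> Hj Hv; rewrite /cnt /endin.
have Hjk : j <= k.+1 by lia.
have Hjk1 : j.+1 <= k.+1 by lia.
have Hne : j.+1 != j by lia.
case: (es_ends Hj) => [[h1 h2]|[h1 h2]].
  by rewrite h1 (neB Hjk1 Hjk Hne h2 Hv) addn0.
by rewrite (notinB Hjk1 Hjk Hne h2) (neB Hjk1 Hjk Hne h2 Hv).
Qed.

Lemma cnt_es_j1 j v : j <= k -> v \in Bs j.+1 -> cnt C (es j) v = (endin C (Bs j.+1) (es j) == v).
Proof.
move=> Hj Hv; rewrite /cnt /endin.
have Hjk : j <= k.+1 by lia.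
have Hjk1 : j.+1 <= k.+1 by lia.
have Hne : j != j.+1 by lia.
case: (es_ends Hj) => [[h1 h2]|[h1 h2]].
  by rewrite (notinB Hjk Hjk1 Hne h1) (neB Hjk Hjk1 Hne h1 Hv).
by rewrite h2 (neB Hjk Hjk1 Hne h1 Hv) addn0.
Qed.

Lemma cnt_es_0 j i v : j <= k -> i <= k.+1 -> i != j -> i != j.+1 -> v \in Bs i ->
  cnt C (es j) v = 0.
Proof.
move=> Hj Hi H1 H2 Hv; rewrite /cnt.
have Hjk : j <= k.+1 by lia.
have Hjk1 : j.+1 <= k.+1 by lia.
rewrite eq_sym in H1; rewrite eq_sym in H2.
case: (es_ends Hj) => [[h1 h2]|[h1 h2]].
  by rewrite (neB Hjk Hi H1 h1 Hv) (neB Hjk1 Hi H2 h2 Hv).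
by rewrite (neB Hjk Hi H1 h1 Hv) (neB Hjk1 Hi H2 h2 Hv).
Qed.

Lemma endin_j j : j <= k -> endin C (Bs j) (es j) \in Bs j.
Proof.
move=> Hj; rewrite /endin; case: ifP => // H.
by case: (es_ends Hj) => [[h1 h2]|[h1 h2]] //; rewrite ?h1 ?h2 in H.
Qed.

Lemma endin_j1 j : j <= k -> endin C (Bs j.+1) (es j) \in Bs j.+1.
Proof.
move=> Hj; rewrite /endin; case: ifP => // H.
by case: (es_ends Hj) => [[h1 h2]|[h1 h2]] //; rewrite ?h1 ?h2 in H.
Qed.

Lemma es_inj i j : i <= k -> j <= k -> es i = es j -> i = j.
Proof.
move=> Hi Hj Eij.
have key : forall a b, a <= k -> b <= k -> es a = es b -> a = b \/ a = b.+1.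
  move=> a b Ha Hb Eab.
  have := cnt_es_j Ha (endin_j Ha); rewrite eqxx {1}Eab.
  case: (altP (a =P b)) => [->|Hab]; first by left.
  case: (altP (a =P b.+1)) => [->|Hab1]; first by right.
  by rewrite (cnt_es_0 Hb _ Hab Hab1 (endin_j Ha)) //; lia.
have H1 := key _ _ Hi Hj Eij; have H2 := key _ _ Hj Hi (esym Eij); lia.
Qed.

Lemma edge_class f : f \in mE C -> f \notin chE ->
  exists2 j, j <= k.+1 & ((mends C f).1 \in Bs j) && ((mends C f).2 \in Bs j).
Proof.
move=> Hf Hnc; have [h1 _] := wf_end Hf.
have [j Hj Hv] := Bcover h1; exists j => //; rewrite Hv /=.
apply: (Bclosed Hj Hv); apply: connect1; apply/adjP; exists f.
  by rewrite /Cdel /= inE Hnc.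
by left; apply: surjective_pairing.
Qed.

Lemma blkE i f : (f \in blk i) =
  [&& f \in mE C, f \notin chE, (mends C f).1 \in Bs i & (mends C f).2 \in Bs i].
Proof. by rewrite /blk /chain_B /= !inE; case: (f \in chE); case: (f \in mE C). Qed.

Lemma es_nblk i j : j <= k -> (es j \in blk i) = false.
Proof. by move=> Hj; rewrite blkE (es_chain Hj) andbF. Qed.


Lemma x_B0 : x \in Bs 0. Proof. by rewrite B0 set11. Qed.
Lemma y_Bk1 : y \in Bs k.+1. Proof. by rewrite Bk1 set11. Qed.

Lemma mVG v : (v \in mV Gc) = [&& v != y, v != x & v \in mV C].
Proof. by rewrite /Gc /chain_closure /= !inE. Qed.

Lemma B_mVG i v : 1 <= i <= k -> v \in Bs i -> v \in mV Gc.
Proof.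
move=> Hi Hv; have Hi' : i <= k.+1 by lia.
rewrite mVG (subsetP (Bsub Hi') _ Hv) andbT.
have Hk1 : k.+1 <= k.+1 by [].
have H0 : 0 <= k.+1 by [].
rewrite (neB Hi' Hk1 _ Hv y_Bk1) ?(neB Hi' H0 _ Hv x_B0) //; lia.
Qed.

Lemma mVG_B v : v \in mV Gc -> exists2 i, 1 <= i <= k & v \in Bs i.
Proof.
rewrite mVG => /and3P [Hy Hx Hv]; have [j Hj Hvj] := Bcover Hv.
exists j => //; apply/andP; split.
  case: j Hj Hvj => // _; rewrite B0 inE => Hvx; by rewrite Hvx in Hx.
move: Hj; rewrite leq_eqVlt => /orP [/eqP Ej|]; last by [].
by move: Hvj; rewrite Ej Bk1 inE => Hvy; rewrite Hvy in Hy.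
Qed.

Lemma mEG_S f : (Some f \in mE Gc) =
  [&& f \in mE C, (mends C f).1 \in mV Gc & (mends C f).2 \in mV Gc].
Proof. by rewrite /Gc /chain_closure /= optS !inE. Qed.

Lemma mEG_N : None \in mE Gc.
Proof. exact: optN. Qed.

Lemma Hb_S i f : (Some f \in mE (Hb i)) = (f \in blk i).
Proof. by rewrite /Hb /chain_block /= optS. Qed.

Lemma Hb_N i : None \in mE (Hb i).
Proof. exact: optN. Qed.

Lemma blk_G i f : 1 <= i <= k -> f \in blk i -> Some f \in mE Gc.
Proof.
move=> Hi; rewrite blkE mEG_S => /and4P [h0 _ h1 h2].
by rewrite h0 (B_mVG Hi h1) (B_mVG Hi h2).
Qed.

Lemma esG j : 0 < j < k -> Some (es j) \in mE Gc.
Proof.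
move=> Hj; have Hjk : j <= k by lia.
rewrite mEG_S (es_mE Hjk) /=.
have Hj1 : 1 <= j <= k by lia.
have Hj2 : 1 <= j.+1 <= k by lia.
case: (es_ends Hjk) => [[h1 h2]|[h1 h2]].
  by rewrite (B_mVG Hj1 h1) (B_mVG Hj2 h2).
by rewrite (B_mVG Hj1 h1) (B_mVG Hj2 h2).
Qed.

Lemma es0G : Some (es 0) \notin mE Gc.
Proof.
have H0 : 0 <= k by [].
rewrite mEG_S !mVG; case: (es_ends H0) => [[h1 _]|[h1 _]];
  move: h1; rewrite B0 inE => /eqP ->; by rewrite eqxx !andbF.
Qed.

Lemma eskG : Some (es k) \notin mE Gc.
Proof.
have H0 : k <= k by [].
rewrite mEG_S !mVG; case: (es_ends H0) => [[_ h1]|[_ h1]];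
  move: h1; rewrite Bk1 inE => /eqP ->; by rewrite eqxx !andbF.
Qed.

Lemma G_class f : Some f \in mE Gc ->
  (exists2 i, 1 <= i <= k & f \in blk i) \/ (exists2 j, 0 < j < k & f = es j).
Proof.
move=> Hf; have := Hf; rewrite mEG_S => /and3P [h0 h1 h2].
case: (boolP (f \in chE)) => Hc.
  have [j Hj Ef] := chE_es Hc; right; exists j => //.
  apply/andP; split.
    case: j Hj Ef => // _ Ef; by move: Hf; rewrite Ef (negPf es0G).
  move: Hj; rewrite leq_eqVlt => /orP [/eqP Ej|] //.
  by move: Hf; rewrite Ef Ej (negPf eskG).
left; have [j Hj /andP [e1 e2]] := edge_class h0 Hc.
have [i Hi Hei] := mVG_B h1.
have Hi' : i <= k.+1 by lia.
have Eij := Bdisj Hj Hi' e1 Hei.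
by exists i => //; rewrite blkE h0 Hc -Eij e1 e2.
Qed.

Lemma xb_B i : 1 <= i <= k -> xb i \in Bs i.
Proof.
move=> Hi; rewrite /xb; have E1 : i = i.-1.+1 by lia.
rewrite {1 3}E1; apply: endin_j1; lia.
Qed.

Lemma yb_B i : 1 <= i <= k -> yb i \in Bs i.
Proof. move=> Hi; rewrite /yb; apply: endin_j; lia. Qed.

Lemma cnt_xb i v : 1 <= i <= k -> v \in Bs i -> cnt C (es i.-1) v = (xb i == v).
Proof.
move=> Hi; have E1 : i = i.-1.+1 by lia.
rewrite /xb {1 3}E1 => Hv; apply: cnt_es_j1 => //; lia.
Qed.

Lemma cnt_yb i v : 1 <= i <= k -> v \in Bs i -> cnt C (es i) v = (yb i == v).
Proof. move=> Hi Hv; rewrite /yb; apply: cnt_es_j => //; lia. Qed.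

Lemma sum_dec i v (g : E -> nat) : 1 <= i <= k -> v \in Bs i ->
  (forall f, f \notin mE C -> g f = 0) ->
  \sum_f g f * cnt C f v =
  \sum_f (f \in blk i) * g f * cnt C f v + g (es i.-1) * (xb i == v)
     + g (es i) * (yb i == v).
Proof.
move=> Hi Hv Hg.
have Hne : es i != es i.-1.
  apply/eqP => /es_inj; have H1 : i <= k by lia. have H2 : i.-1 <= k by lia.
  move=> /(_ H1 H2); lia.
rewrite (bigD1 (es i.-1)) //= (bigD1 (es i)) //=.
rewrite [in RHS](bigD1 (es i.-1)) //= [in RHS](bigD1 (es i)) //=.
have Hik : i <= k by lia. have Hik1 : i.-1 <= k by lia.
rewrite !es_nblk // !mul0n !add0n (cnt_xb Hi Hv) (cnt_yb Hi Hv).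
set L := \sum_(f | _) _; set R := \sum_(f | _) _.
suff -> : L = R by lia.
apply: eq_bigr => f /andP [H1 H2].
case Hb: (f \in blk i); first by rewrite mul1n.
rewrite mul0n; case: (boolP (f \in mE C)) => Hf; last by rewrite Hg.
have Hik' : i <= k.+1 by lia.
case: (boolP (f \in chE)) => Hc.
  have [j Hj Ef] := chE_es Hc.
  rewrite Ef (cnt_es_0 (i:=i) Hj Hik') ?muln0 //.
    by apply/eqP => Eij; move: H2; rewrite Ef Eij eqxx.
  by apply/eqP => Eij; move: H1; rewrite Ef Eij /= eqxx.
have [j Hj /andP [h1 h2]] := edge_class Hf Hc.
case: (altP (j =P i)) => Eji.
  by move: Hb; rewrite blkE Hf Hc -Eji h1 h2.
by rewrite /cnt (neB Hj Hik' Eji h1 Hv) (neB Hj Hik' Eji h2 Hv) muln0.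
Qed.

Definition cons (F : {set option E}) :=
  forall j, 0 < j < k -> (Some (es j) \in F) = (None \in F).
Definition restr i (F : {set option E}) := F :&: mE (Hb i).

Lemma degG (F : {set option E}) v : deg (span_sub Gc F) v =
  (None \in F) * ((xb 1 == v) + (yb k == v)) + \sum_f (Some f \in F) * cnt C f v.
Proof. by rewrite degE big_opt. Qed.

Lemma degH i (F : {set option E}) v : deg (span_sub (Hb i) F) v =
  (None \in F) * ((xb i == v) + (yb i == v)) + \sum_f (Some f \in F) * cnt C f v.
Proof. by rewrite degE big_opt. Qed.

Lemma DEG (F : {set option E}) i v : F \subset mE Gc -> cons F -> 1 <= i <= k -> v \in Bs i ->
  deg (span_sub Gc F) v = deg (span_sub (Hb i) (restr i F)) v.
Proof.
move=> HF Hc Hi Hv; rewrite degG degH.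
have HSF : forall f, Some f \in F -> f \in mE C.
  by move=> f /(subsetP HF); rewrite mEG_S => /and3P [].
rewrite (sum_dec (g := fun f => nat_of_bool (Some f \in F)) Hi Hv); last first.
  by move=> f Hf; case: (boolP (Some f \in F)) => // /HSF; rewrite (negPf Hf).
rewrite /restr in_setI Hb_N andbT.
have -> : \sum_f (f \in blk i) * (Some f \in F) * cnt C f v =
          \sum_f (Some f \in F :&: mE (Hb i)) * cnt C f v.
  by apply: eq_bigr => f _; rewrite in_setI Hb_S; case: (_ \in blk i); case: (_ \in F).
have Ex : (None \in F) * (xb 1 == v) + (Some (es i.-1) \in F) * (xb i == v)
          = (None \in F) * (xb i == v).
  case: (altP (i =P 1)) => [Ei|Hi1].
    rewrite Ei /=; case: (boolP (Some (es 0) \in F)) => H0.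
      by move: (subsetP HF _ H0); rewrite (negPf es0G).
    by rewrite mul0n addn0.
  have H1 : 1 <= 1 <= k by lia.
  have H1' : 1 <= k.+1 by lia. have Hi' : i <= k.+1 by lia.
  rewrite (neB H1' Hi' _ (xb_B H1) Hv); last by rewrite eq_sym.
  by rewrite Hc ?muln0 ?add0n //; lia.
have Ey : (None \in F) * (yb k == v) + (Some (es i) \in F) * (yb i == v)
          = (None \in F) * (yb i == v).
  case: (altP (i =P k)) => [Ei|Hik].
    rewrite Ei /=; case: (boolP (Some (es k) \in F)) => H0.
      by move: (subsetP HF _ H0); rewrite (negPf eskG).
    by rewrite mul0n addn0.
  have H1 : 1 <= k <= k by lia.
  have H1' : k <= k.+1 by lia. have Hi' : i <= k.+1 by lia.
  rewrite (neB H1' Hi' _ (yb_B H1) Hv); last by rewrite eq_sym.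
  by rewrite Hc ?muln0 ?add0n //; lia.
rewrite !mulnDr -Ex -Ey; lia.
Qed.


Lemma wfG : wf_graph Gc.
Proof.
apply/forallP => -[f|]; apply/implyP => Hf /=.
  by move: Hf; rewrite mEG_S => /and3P [_ -> ->].
have Hk1 : 1 <= 1 <= k by lia.
have Hkk : 1 <= k <= k by lia.
have h1 : xb 1 \in mV Gc := B_mVG Hk1 (xb_B Hk1).
have h2 : yb k \in mV Gc := B_mVG Hkk (yb_B Hkk).
by apply/andP.
Qed.

Definition Sj j := [set w | [exists m : 'I_j.+1, (0 < m) && (w \in Bs m)]].

Lemma inS j i v : j < k -> 1 <= i <= k -> v \in Bs i -> (v \in Sj j) = (i <= j).
Proof.
move=> Hj Hi Hv; rewrite inE; apply/existsP/idP => [[m /andP [Hm Hvm]]|Hij].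
  have Hm' : m <= k.+1 by have := ltn_ord m; lia.
  have Hi' : i <= k.+1 by lia.
  rewrite (Bdisj Hi' Hm' Hv Hvm); have := ltn_ord m; lia.
have Hij' : i < j.+1 by lia.
by exists (Ordinal Hij'); rewrite /= Hv andbT; lia.
Qed.

Lemma es_pair m : m <= k ->
  mends C (es m) = (yb m, xb m.+1) \/ mends C (es m) = (xb m.+1, yb m).
Proof.
move=> Hm; rewrite /yb /xb /= /endin.
have Hm0 : m <= k.+1 by lia. have Hm1 : m.+1 <= k.+1 by lia.
have Hne : m != m.+1 by lia.
case: (es_ends Hm) => [[h1 h2]|[h1 h2]].
  left; rewrite h1 (notinB Hm0 Hm1 Hne h1); by case: (mends C (es m)).
right; rewrite (notinB Hm1 Hm0 _ h2) ?h2 //; last by rewrite eq_sym.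
by case: (mends C (es m)).
Qed.

Lemma crossS j f : 0 < j < k -> Some f \in mE Gc ->
  (((mends C f).1 \in Sj j) (+) ((mends C f).2 \in Sj j)) = (f == es j).
Proof.
move=> Hj Hf; have Hjk : j < k by lia.
case: (G_class Hf) => [[i Hi Hb]|[m Hm ->]].
  have := Hb; rewrite blkE => /and4P [_ _ h1 h2].
  rewrite (inS Hjk Hi h1) (inS Hjk Hi h2) addbb.
  case: eqP => // Ef; have Hj' : j <= k by lia.
  by move: Hb; rewrite Ef es_nblk.
have Hmk : m <= k by lia.
have Hm1 : 1 <= m <= k by lia. have Hm2 : 1 <= m.+1 <= k by lia.
have -> : (es m == es j) = (m == j).
  apply/eqP/eqP => [|->] //; apply: es_inj; lia.
case: (es_ends Hmk) => [[h1 h2]|[h1 h2]];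
  rewrite (inS Hjk Hm1 h1) (inS Hjk Hm2 h2); case: (ltngtP m j) => H; try lia;
  rewrite ?H ?leqnn ?ltnn //=; try (by rewrite ltnW //; lia); lia.
Qed.

Lemma cons_even F : even_cover Gc F -> cons F.
Proof.
move=> Hev j Hj; have [HF _] := evP Hev.
have Hjk : j < k by lia.
have := par_even (G := Gc) (F := F) (S := Sj j).
have Hod : forall v, v \in Sj j -> ~~ odd (deg (span_sub Gc F) v).
  move=> v; rewrite inE => /existsP [m /andP [Hm Hvm]].
  apply: (ev_odd Hev); apply: (B_mVG (i := m)) => //; have := ltn_ord m; lia.
move=> /(_ Hod); rewrite card_setsum big_opt /=.
have Hk1 : 1 <= 1 <= k by lia. have Hkk : 1 <= k <= k by lia.
have -> : (endin C (Bs 1) (es 0) \in Sj j) = true.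
  by rewrite (inS (i := 1) Hjk Hk1 (xb_B Hk1)); lia.
have -> : (endin C (Bs k) (es k) \in Sj j) = false.
  by rewrite (inS (i := k) Hjk Hkk (yb_B Hkk)); lia.
have -> : \sum_f ((Some f \in F) && (((mends C f).1 \in Sj j) (+) ((mends C f).2 \in Sj j)))
   = \sum_f ((Some f \in F) && (f == es j)).
  apply: eq_bigr => f _; case H: (Some f \in F) => //=.
  by rewrite crossS // (subsetP HF _ H).
rewrite (bigD1 (es j)) //= eqxx andbT big1 ?addn0; last first.
  by move=> f /negPf ->; rewrite andbF.
by case: (None \in F); case: (Some (es j) \in F).
Qed.

Lemma restr_sub i F : restr i F \subset mE (Hb i).
Proof. exact: subsetIr. Qed.

Lemma restr_even i F : 1 <= i <= k -> even_cover Gc F -> even_cover (Hb i) (restr i F).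
Proof.
move=> Hi Hev; have [HF Hd] := evP Hev; apply: evI; first exact: restr_sub.
move=> v Hv; rewrite -(DEG HF (cons_even Hev) Hi Hv); apply: Hd.
exact: (B_mVG Hi Hv).
Qed.


Definition Fb (F : {set option E}) :=
  [set o in F | if o is Some f then f \notin chE else false].
Definition Rb (F : {set option E}) := adj (span_sub Gc (Fb F)).
Definition cb (F : {set option E}) v := [set w in mV Gc | connect (Rb F) v w].

Lemma Rb_sym (F : {set option E}) : symmetric (Rb F).
Proof. exact: adj_sym. Qed.

Lemma Rb_csym (F : {set option E}) : connect_sym (Rb F).
Proof. exact: (sym_connect_sym (@Rb_sym F)). Qed.

Lemma Rb_edge (F : {set option E}) f : Some f \in F -> f \notin chE ->
  Rb F (mends C f).1 (mends C f).2.
Proof.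
move=> H1 H2; apply/adjP; exists (Some f); first by rewrite inE H1.
by left; apply: surjective_pairing.
Qed.

Lemma R1 (F : {set option E}) a b : Rb F a b -> adj (span_sub Gc F) a b.
Proof.
move=> /adjP [o Ho Hm]; apply/adjP; exists o => //.
by move: Ho; rewrite inE => /andP [].
Qed.

Lemma R2 (F : {set option E}) i a b : F \subset mE Gc -> 1 <= i <= k -> a \in Bs i -> Rb F a b ->
  b \in Bs i /\ adj (span_sub (Hb i) (restr i F)) a b.
Proof.
move=> HF Hi Ha /adjP [[f|] Ho Hm]; last by move: Ho; rewrite inE andbF.
move: Ho; rewrite inE => /andP [HoF Hnc].
have Hm' : mends C f = (a, b) \/ mends C f = (b, a) := Hm.
have Hi0 : i <= k.+1 by lia.
case: (G_class (subsetP HF _ HoF)) => [[i' Hi' Hb]|[m Hm0 Ef]]; last first.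
  by move: Hnc; rewrite Ef es_chain //; lia.
have := Hb; rewrite blkE => /and4P [_ _ h1 h2].
have Hi1 : i' <= k.+1 by lia.
have Eii : i' = i.
  case: Hm' => E1; rewrite E1 /= in h1 h2; [exact: (Bdisj Hi1 Hi0 h1 Ha)|exact: (Bdisj Hi1 Hi0 h2 Ha)].
subst i'; split.
  by case: Hm' => E1; rewrite E1 /= in h1 h2.
apply/adjP; exists (Some f) => //.
by rewrite /restr in_setI HoF Hb_S.
Qed.

Lemma R3 (F : {set option E}) i a b : adj (span_sub (Hb i) (restr i F)) a b ->
  Rb F a b \/ (None \in F /\ ((a = xb i /\ b = yb i) \/ (a = yb i /\ b = xb i))).
Proof.
move=> /adjP [[f|] Ho Hm].
  left; move: Ho; rewrite /restr in_setI Hb_S => /andP [HoF Hb].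
  apply/adjP; exists (Some f) => //.
  by rewrite inE HoF /=; move: Hb; rewrite blkE => /and4P [].
right; move: Ho; rewrite /restr in_setI => /andP [HoF _]; split => //.
have Hm' : (xb i, yb i) = (a, b) \/ (xb i, yb i) = (b, a) := Hm.
by case: Hm' => -[-> ->]; [left|right].
Qed.

Lemma R4 (F : {set option E}) a b : F \subset mE Gc -> adj (span_sub Gc F) a b ->
  Rb F a b \/ (None \in F /\ ((a = xb 1 /\ b = yb k) \/ (a = yb k /\ b = xb 1))) \/
  (exists2 j, 0 < j < k & Some (es j) \in F /\
     ((a = yb j /\ b = xb j.+1) \/ (a = xb j.+1 /\ b = yb j))).
Proof.
move=> HF /adjP [[f|] Ho Hm]; last first.
  right; left; split => //.
  have Hm' : (xb 1, yb k) = (a, b) \/ (xb 1, yb k) = (b, a) := Hm.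
  by case: Hm' => -[-> ->]; [left|right].
case: (boolP (f \in chE)) => Hc; last first.
  left; apply/adjP; exists (Some f) => //; by rewrite inE Ho.
right; right; have [m Hmk Ef] := chE_es Hc.
have HG := subsetP HF _ Ho; rewrite Ef in HG Ho.
have Hm0 : 0 < m < k.
  have H1 : m != 0 by apply/eqP => Em; move: HG; rewrite Em (negPf es0G).
  have H2 : m != k by apply/eqP => Em; move: HG; rewrite Em (negPf eskG).
  lia.
exists m => //; split => //.
have Hm' : mends C f = (a, b) \/ mends C f = (b, a) := Hm.
rewrite Ef in Hm'.
by case: (es_pair Hmk) => E1; rewrite E1 in Hm'; case: Hm' => -[-> ->];
  by [left|right|right|left].
Qed.

Lemma R5a (F : {set option E}) : None \in F -> adj (span_sub Gc F) (xb 1) (yb k).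
Proof. by move=> H; apply/adjP; exists None => //; left. Qed.

Lemma R5b (F : {set option E}) j : j <= k -> Some (es j) \in F -> adj (span_sub Gc F) (yb j) (xb j.+1).
Proof.
move=> Hj H; apply/adjP; exists (Some (es j)) => //.
by case: (es_pair Hj) => E1; [left|right].
Qed.

Lemma R5c (F : {set option E}) i : None \in restr i F -> adj (span_sub (Hb i) (restr i F)) (xb i) (yb i).
Proof. by move=> H; apply/adjP; exists None => //; left. Qed.

Lemma Rb_stay (F : {set option E}) i v w : F \subset mE Gc -> 1 <= i <= k -> v \in Bs i ->
  connect (Rb F) v w -> w \in Bs i.
Proof.
move=> HF Hi Hv; apply: (conn_stay (S := fun u => u \in Bs i)) => //.
by move=> a b Ha Hab; case: (R2 HF Hi Ha Hab).
Qed.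

Lemma xy_conn (F : {set option E}) i : F \subset mE Gc -> 1 <= i <= k -> None \in F ->
  even_cover (Hb i) (restr i F) -> connect (Rb F) (xb i) (yb i).
Proof.
move=> HF Hi HN Hev.
set S := [set w in Bs i | connect (Rb F) (xb i) w].
have Hod : forall w, w \in S -> ~~ odd (deg (span_sub (Hb i) (restr i F)) w).
  by move=> w; rewrite inE => /andP [Hw _]; apply: (ev_odd Hev).
have := par_even Hod; rewrite card_setsum big_opt /=.
have -> : (endin C (Bs i) (es i.-1) \in S) = true.
  by rewrite inE connect0 andbT; apply: (xb_B Hi).
have -> : \sum_f ((Some f \in restr i F) &&
     (((mends C f).1 \in S) (+) ((mends C f).2 \in S))) = 0.
  apply: big1 => f _; case H: (Some f \in restr i F) => //=.
  move: H; rewrite /restr in_setI Hb_S => /andP [HfF Hb].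
  have := Hb; rewrite blkE => /and4P [_ Hnc h1 h2].
  have E1 := Rb_edge HfF Hnc.
  rewrite !inE h1 h2 /=.
  case: (boolP (connect (Rb F) (xb i) (mends C f).1)) => C1.
    by rewrite (connect_trans C1 (connect1 E1)).
  case: (boolP (connect (Rb F) (xb i) (mends C f).2)) => C2 //.
  move: C1; rewrite (connect_trans C2) //; apply: connect1.
  by rewrite Rb_sym.
rewrite /restr in_setI HN Hb_N /= addn0.
rewrite inE (yb_B Hi) /=; by case: connect.
Qed.

Lemma RH_Rb (F : {set option E}) i v w : even_cover Gc F -> 1 <= i <= k -> v \in Bs i ->
  connect (adj (span_sub (Hb i) (restr i F))) v w = connect (Rb F) v w.
Proof.
move=> Hev Hi Hv; have [HF _] := evP Hev.
have Hre := restr_even Hi Hev.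
apply/idP/idP.
  apply: (conn_mono (S := fun u => u \in Bs i)) => // a b Ha Hab.
  case: (R3 Hab) => [Hr|[HN Hp]].
    by have [Hb _] := R2 HF Hi Ha Hr; split => //; apply: connect1.
  have Hxy := xy_conn HF Hi HN Hre.
  case: Hp => -[-> ->]; split; rewrite ?(xb_B Hi) ?(yb_B Hi) //.
  by rewrite Rb_csym.
apply: (conn_mono (S := fun u => u \in Bs i)) => // a b Ha Hab.
by have [Hb Hadj] := R2 HF Hi Ha Hab; split => //; apply: connect1.
Qed.

Lemma clsH (F : {set option E}) i v : even_cover Gc F -> 1 <= i <= k -> v \in Bs i ->
  cls (span_sub (Hb i) (restr i F)) v = cb F v.
Proof.
move=> Hev Hi Hv; have [HF _] := evP Hev.
apply/setP => w; rewrite !inE /= (RH_Rb w Hev Hi Hv).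
case: (boolP (connect (Rb F) v w)) => Hc; rewrite ?andbF ?andbT //.
have Hw := Rb_stay HF Hi Hv Hc.
by rewrite Hw -mVG (B_mVG Hi Hw).
Qed.

Lemma cb_sub (F : {set option E}) i v : F \subset mE Gc -> 1 <= i <= k -> v \in Bs i -> cb F v \subset Bs i.
Proof.
move=> HF Hi Hv; apply/subsetP => w; rewrite inE => /andP [_ Hc].
exact: (Rb_stay HF Hi Hv Hc).
Qed.


Lemma cb_eq (F : {set option E}) u w : w \in cb F u -> cb F w = cb F u.
Proof. exact: (@cls_eq _ _ (span_sub Gc (Fb F)) u w). Qed.

Lemma cb_self (F : {set option E}) v : v \in mV Gc -> v \in cb F v.
Proof. exact: (@cls_self _ _ (span_sub Gc (Fb F)) v). Qed.

Definition NZG (F : {set option E}) := [set v in mV Gc | deg (span_sub Gc F) v != 0].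
Definition NZH (F : {set option E}) i :=
  [set v in Bs i | deg (span_sub (Hb i) (restr i F)) v != 0].
Definition SH (F : {set option E}) i := cb F @: NZH F i.

Lemma NZG_E (F : {set option E}) v :
  (v \in NZG F) = (v \in mV Gc) && (deg (span_sub Gc F) v != 0).
Proof. by rewrite /NZG !inE. Qed.

Lemma NZH_E (F : {set option E}) i v :
  (v \in NZH F i) = (v \in Bs i) && (deg (span_sub (Hb i) (restr i F)) v != 0).
Proof. by rewrite /NZH !inE. Qed.

Lemma ncH (F : {set option E}) i : even_cover Gc F -> 1 <= i <= k ->
  ncycles (Hb i) (restr i F) = #|SH F i|.
Proof.
move=> Hev Hi; rewrite ncyclesE /SH; apply: eq_card => K.
apply/imsetP/imsetP => -[v Hv ->]; exists v => //; move: Hv; rewrite inE => /andP [Hv _];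
  by rewrite clsH.
Qed.

Lemma NZ_eq (F : {set option E}) i v : even_cover Gc F -> 1 <= i <= k -> v \in Bs i ->
  (v \in NZG F) = (v \in NZH F i).
Proof.
move=> Hev Hi Hv; have [HF _] := evP Hev.
by rewrite NZG_E NZH_E (B_mVG Hi Hv) Hv (DEG HF (cons_even Hev) Hi Hv).
Qed.

Lemma SH_disj (F : {set option E}) i j K : F \subset mE Gc -> 1 <= i <= k -> 1 <= j <= k ->
  K \in SH F i -> K \in SH F j -> i = j.
Proof.
move=> HF Hi Hj /imsetP [v Hv ->] /imsetP [w Hw Ew].
move: Hv Hw; rewrite !inE => /andP [Hv _] /andP [Hw _].
have Hvv := cb_self F (B_mVG Hi Hv).
rewrite Ew in Hvv; have := subsetP (cb_sub HF Hj Hw) _ Hvv => Hvj.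
apply: (Bdisj (v := v)) => //; lia.
Qed.

Lemma sum_disj (U : finType) (P : nat -> pred U) K :
  (forall i j, i < k -> j < k -> P i.+1 K -> P j.+1 K -> i = j) ->
  \sum_(i < k) P i.+1 K = [exists i : 'I_k, P i.+1 K].
Proof.
move=> Hd; case: existsP => [[i Hi]|Hn].
  rewrite (bigD1 i) //= Hi big1 // => j Hj; case Hjk: (P j.+1 K) => //.
  have Eji : j = i by apply: val_inj; exact: (Hd _ _ (ltn_ord j) (ltn_ord i) Hjk Hi).
  by rewrite Eji eqxx in Hj.
by rewrite big1 // => j _; case H: (P j.+1 K) => //; case: Hn; exists j.
Qed.

Lemma card_sumE (U : finType) (A : {set U}) : #|A| = \sum_K (K \in A).
Proof. by rewrite -sum1_card big_mkcond; apply: eq_bigr => K _; case: (K \in A). Qed.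

Lemma ord_blk i : 1 <= i <= k -> exists j : 'I_k, i = j.+1.
Proof. move=> Hi; have Hj : i.-1 < k by lia. by exists (Ordinal Hj) => /=; lia. Qed.

Lemma SH_sum (F : {set option E}) (A : nat -> {set {set V}}) :
  F \subset mE Gc -> (forall i, A i \subset SH F i) ->
  \sum_K [exists i : 'I_k, K \in A i.+1] = \sum_(i < k) #|A i.+1|.
Proof.
move=> HF HA.
rewrite (eq_bigr (fun K => \sum_(i < k) (K \in A i.+1))); last first.
  move=> K _; rewrite (sum_disj (P := fun i K => K \in A i)) //.
  move=> i j Hi Hj H1 H2.
  have : i.+1 = j.+1 by apply: (SH_disj (K := K) HF _ _ (subsetP (HA _) _ H1) (subsetP (HA _) _ H2)); lia.
  by case.
by rewrite exchange_big /=; apply: eq_bigr => i _; rewrite card_sumE.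
Qed.

Lemma nc0 (F : {set option E}) : even_cover Gc F -> None \notin F ->
  ncycles Gc F = \sum_(i < k) #|SH F i.+1|.
Proof.
move=> Hev HN; have [HF _] := evP Hev; have Hc := cons_even Hev.
have Ecl : forall v, cls (span_sub Gc F) v = cb F v.
  move=> v; apply/setP => w; rewrite !inE /=; congr (_ && _); apply/idP/idP.
    apply: (conn_mono (S := predT)) => // a b _ Hab; split => //.
    case: (R4 HF Hab) => [Hr|[[HN' _]|[j Hj [HS _]]]]; first exact: connect1.
      by rewrite HN' in HN.
    by rewrite Hc // in HS; rewrite HS in HN.
  apply: (conn_mono (S := predT)) => // a b _ Hab; split => //.
  by apply: connect1; apply: R1.
rewrite ncyclesE (eq_imset _ Ecl) card_sumE.
rewrite -(@SH_sum F (SH F)) //; apply: eq_bigr => K _.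
congr nat_of_bool; apply/imsetP/existsP => [[v Hv ->]|[i /imsetP [v Hv ->]]].
  have Hv' : v \in mV Gc by have : v \in NZG F := Hv; rewrite NZG_E => /andP [].
  have [i Hi Hvi] := mVG_B Hv'; have [j Ej] := ord_blk Hi.
  exists j; rewrite -Ej; apply/imsetP; exists v => //.
  by rewrite -(NZ_eq Hev Hi Hvi).
have Hi : 1 <= i.+1 <= k by have := ltn_ord i; lia.
exists v => //; have := Hv; rewrite NZH_E => /andP [Hvi _].
by rewrite (NZ_eq Hev Hi Hvi).
Qed.


Lemma clsGE (F : {set option E}) v w :
  (w \in cls (span_sub Gc F) v) = (w \in mV Gc) && connect (adj (span_sub Gc F)) v w.
Proof. exact: clsE. Qed.

Lemma cbE (F : {set option E}) v w :
  (w \in cb F v) = (w \in mV Gc) && connect (Rb F) v w.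
Proof. exact: (@clsE _ _ (span_sub Gc (Fb F))). Qed.

Definition Zc (F : {set option E}) := cls (span_sub Gc F) (xb 1).

Lemma conn_xbi (F : {set option E}) i : even_cover Gc F -> None \in F -> 1 <= i <= k ->
  connect (adj (span_sub Gc F)) (xb 1) (xb i).
Proof.
move=> Hev HN; have [HF _] := evP Hev; have Hc := cons_even Hev.
elim: i => [|i IH] Hi; first by lia.
case: (posnP i) => [->|Hi0]; first exact: connect0.
have Hi' : 1 <= i <= k by lia.
apply: (connect_trans (IH Hi')).
have Hxy := xy_conn HF Hi' HN (restr_even Hi' Hev).
apply: (connect_trans (y := yb i)).
  apply: (conn_mono (S := predT)) Hxy => // a b _ Hab; split => //.
  by apply: connect1; apply: R1.
apply: connect1; apply: R5b; first by lia.
by rewrite Hc //; lia.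
Qed.

Lemma Z1 (F : {set option E}) i w : even_cover Gc F -> None \in F -> 1 <= i <= k ->
  w \in Bs i -> (w \in Zc F) = connect (Rb F) (xb i) w.
Proof.
move=> Hev HN Hi Hw; have [HF _] := evP Hev.
have Hxy : forall j, 1 <= j <= k -> connect (Rb F) (xb j) (yb j).
  by move=> j Hj; apply: (xy_conn HF Hj HN (restr_even Hj Hev)).
rewrite /Zc clsGE; apply/idP/idP.
  move=> /andP [_ Hc].
  pose P := fun u => exists2 i', 1 <= i' <= k & u \in Bs i' /\ connect (Rb F) (xb i') u.
  have HS : P w.
    apply: (conn_stayP (S := P) _ _ Hc); last first.
      have H1 : 1 <= 1 <= k by lia.
      by exists 1 => //; split; [exact: (xb_B H1)|exact: connect0].
    move=> a b [i' Hi' [Ha Hca]] Hab.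
    case: (R4 HF Hab) => [Hr|[[_ [[_ ->]|[_ ->]]]|[j Hj [_ [[_ ->]|[_ ->]]]]]].
    - have [Hb _] := R2 HF Hi' Ha Hr; exists i' => //; split => //.
      exact: (connect_trans Hca (connect1 Hr)).
    - have H1 : 1 <= k <= k by lia.
      by exists k => //; split; [exact: (yb_B H1)|exact: Hxy].
    - have H1 : 1 <= 1 <= k by lia.
      by exists 1 => //; split; [exact: (xb_B H1)|exact: connect0].
    - have H1 : 1 <= j.+1 <= k by lia.
      by exists j.+1 => //; split; [exact: (xb_B H1)|exact: connect0].
    - have H1 : 1 <= j <= k by lia.
      by exists j => //; split; [exact: (yb_B H1)|exact: Hxy].
  case: HS => i' Hi' [Hw' Hc'].
  have Eii : i' = i by apply: (Bdisj (v := w)) => //; lia.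
  by rewrite -Eii.
move=> Hc; rewrite (B_mVG Hi Hw) /=.
apply: (connect_trans (conn_xbi Hev HN Hi)).
apply: (conn_mono (S := predT)) Hc => // a b _ Hab; split => //.
by apply: connect1; apply: R1.
Qed.

Lemma xbZ (F : {set option E}) i : even_cover Gc F -> None \in F -> 1 <= i <= k ->
  xb i \in Zc F.
Proof. by move=> Hev HN Hi; rewrite (Z1 Hev HN Hi (xb_B Hi)) connect0. Qed.

Lemma ybZ (F : {set option E}) i : even_cover Gc F -> None \in F -> 1 <= i <= k ->
  yb i \in Zc F.
Proof.
move=> Hev HN Hi; have [HF _] := evP Hev.
by rewrite (Z1 Hev HN Hi (yb_B Hi)) (xy_conn HF Hi HN (restr_even Hi Hev)).
Qed.

Lemma Z2 (F : {set option E}) v : even_cover Gc F -> None \in F ->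
  v \in mV Gc -> v \notin Zc F -> cls (span_sub Gc F) v = cb F v.
Proof.
move=> Hev HN Hv HvZ; have [HF _] := evP Hev.
apply/setP => w; rewrite clsGE cbE; congr (_ && _); apply/idP/idP; last first.
  apply: (conn_mono (S := predT)) => // a b _ Hab; split => //.
  by apply: connect1; apply: R1.
apply: (conn_monoP (S := fun a => a \in mV Gc /\ a \notin Zc F)) => //.
move=> a b [Ha HaZ] Hab.
have Hb : b \in mV Gc := adj_mV (wf_span wfG HF) Hab.
have HbZ : b \notin Zc F.
  apply/negP => HbZ; apply: (negP HaZ); move: HbZ; rewrite /Zc !clsGE Ha Hb /=.
  by move=> Hc; apply: (connect_trans Hc); apply: connect1; rewrite adj_sym.
have H1 : 1 <= 1 <= k by lia. have Hkk : 1 <= k <= k by lia.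
case: (R4 HF Hab) => [Hr|[[_ [[Ea _]|[Ea _]]]|[j Hj [_ [[Ea _]|[Ea _]]]]]].
- by split => //; apply: connect1.
- by rewrite Ea (xbZ Hev HN H1) in HaZ.
- by rewrite Ea (ybZ Hev HN Hkk) in HaZ.
- have Hj' : 1 <= j <= k by lia.
  by rewrite Ea (ybZ Hev HN Hj') in HaZ.
- have Hj' : 1 <= j.+1 <= k by lia.
  by rewrite Ea (xbZ Hev HN Hj') in HaZ.
Qed.

Definition SH' (F : {set option E}) i := SH F i :\ cb F (xb i).

Lemma SH'_c (F : {set option E}) i K : even_cover Gc F -> None \in F -> 1 <= i <= k ->
  K \in SH' F i -> K \in cls (span_sub Gc F) @: NZG F /\ K != Zc F.
Proof.
move=> Hev HN Hi; have [HF _] := evP Hev.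
rewrite /SH' in_setD1 => /andP [HK /imsetP [v Hv EK]].
move: (Hv); rewrite NZH_E => /andP [Hvi _].
have HvG := B_mVG Hi Hvi.
have HvZ : v \notin Zc F.
  apply/negP; rewrite (Z1 Hev HN Hi Hvi) => Hc.
  have : v \in cb F (xb i) by rewrite cbE HvG.
  by move/cb_eq; rewrite -EK => E1; rewrite E1 eqxx in HK.
split.
  apply/imsetP; exists v; first by rewrite (NZ_eq Hev Hi Hvi).
  by rewrite EK (Z2 Hev HN HvG HvZ).
apply/eqP => EZ; apply: (negP HvZ); rewrite -EZ EK.
exact: cb_self.
Qed.

Lemma SH'_b (F : {set option E}) K : even_cover Gc F -> None \in F ->
  K \in cls (span_sub Gc F) @: NZG F -> K != Zc F ->
  exists i : 'I_k, K \in SH' F i.+1.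
Proof.
move=> Hev HN /imsetP [v Hv EK] HKZ; have [HF _] := evP Hev.
have HvG : v \in mV Gc by move: Hv; rewrite NZG_E => /andP [].
have HvZ : v \notin Zc F.
  apply/negP => HvZ; apply: (negP HKZ); rewrite EK; apply/eqP.
  exact: (cls_eq HvZ).
have [i Hi Hvi] := mVG_B HvG; have [j Ej] := ord_blk Hi.
exists j; rewrite -Ej /SH' in_setD1 EK (Z2 Hev HN HvG HvZ).
apply/andP; split.
  apply/negP => /eqP E1; apply: (negP HvZ); rewrite (Z1 Hev HN Hi Hvi).
  have := cb_self F HvG; rewrite E1 cbE => /andP [] //.
apply/imsetP; exists v => //.
by rewrite -(NZ_eq Hev Hi Hvi).
Qed.

Lemma nc1 (F : {set option E}) : even_cover Gc F -> None \in F ->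
  ncycles Gc F + k = \sum_(i < k) #|SH F i.+1| + 1.
Proof.
move=> Hev HN; have [HF _] := evP Hev.
have H1 : 1 <= 1 <= k by lia.
have Hin : forall i, 1 <= i <= k -> cb F (xb i) \in SH F i.
  move=> i Hi; apply/imsetP; exists (xb i) => //.
  rewrite NZH_E (xb_B Hi) degH /restr in_setI HN Hb_N eqxx /=; lia.
have ZG : Zc F \in cls (span_sub Gc F) @: NZG F.
  apply/imsetP; exists (xb 1) => //.
  rewrite NZG_E (B_mVG H1 (xb_B H1)) degG HN eqxx /=; lia.
have key : forall K, nat_of_bool (K \in cls (span_sub Gc F) @: NZG F) =
    (K == Zc F) + [exists i : 'I_k, K \in SH' F i.+1].
  move=> K; case: (altP (K =P Zc F)) => [->|HKZ].
    rewrite ZG; case: existsP => // -[i Hi].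
    have Hi' : 1 <= i.+1 <= k by have := ltn_ord i; lia.
    by have [_] := SH'_c Hev HN Hi' Hi; rewrite eqxx.
  rewrite add0n; congr nat_of_bool; apply/idP/existsP.
    by move=> HK; apply: SH'_b.
  move=> [i Hi]; have Hi' : 1 <= i.+1 <= k by have := ltn_ord i; lia.
  by have [] := SH'_c Hev HN Hi' Hi.
rewrite ncyclesE card_sumE.
rewrite (eq_bigr _ (fun K _ => key K)) big_split /=.
rewrite (@SH_sum F (SH' F)) //; last by move=> i; apply: subsetDl.
rewrite (bigD1 (Zc F)) //= eqxx big1 ?addn0; last by move=> K /negPf ->.
have -> : \sum_(i < k) #|SH F i.+1| = \sum_(i < k) (#|SH' F i.+1| + 1).
  apply: eq_bigr => i _; have Hi : 1 <= i.+1 <= k by have := ltn_ord i; lia.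
  by rewrite (cardsD1 (cb F (xb i.+1))) (Hin _ Hi) addnC.
rewrite big_split /= sum1_card card_ord; by rewrite -addnA addnC.
Qed.


Lemma SUMV (phi : V -> nat) :
  \sum_v (v \in mV Gc) * phi v = \sum_(i < k) \sum_v (v \in Bs i.+1) * phi v.
Proof.
rewrite exchange_big /=; apply: eq_bigr => v _; rewrite -big_distrl /=.
congr (_ * _); rewrite (sum_disj (P := fun i v => v \in Bs i)).
  congr nat_of_bool; apply/idP/existsP => [Hv|[i Hi]].
    by have [i Hi Hvi] := mVG_B Hv; have [j Ej] := ord_blk Hi; exists j; rewrite -Ej.
  by apply: (B_mVG (i := i.+1)) => //; have := ltn_ord i; lia.
move=> i j Hi Hj H1 H2; have : i.+1 = j.+1 by apply: (Bdisj (v := v)) => //; lia.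
by case.
Qed.

Lemma card_mul (U : finType) (A : {set U}) (P : pred U) :
  #|[set v in A | P v]| = \sum_v (v \in A) * P v.
Proof. by rewrite card_setsum; apply: eq_bigr => v _; case: (v \in A); case: (P v). Qed.

Lemma nisoE (F : {set option E}) : even_cover Gc F ->
  nisolated Gc F = \sum_(i < k) nisolated (Hb i.+1) (restr i.+1 F).
Proof.
move=> Hev; have [HF _] := evP Hev.
rewrite /nisolated card_mul SUMV; apply: eq_bigr => i _.
have Hi : 1 <= i.+1 <= k by have := ltn_ord i; lia.
rewrite card_mul; apply: eq_bigr => v _.
case Hv: (v \in Bs i.+1) => //.
by rewrite (DEG HF (cons_even Hev) Hi Hv).
Qed.

Lemma CORE (F : {set option E}) : even_cover Gc F ->
  excF Gc F + 2 * k * (None \in F) =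
  \sum_(i < k) excF (Hb i.+1) (restr i.+1 F) + 2 * (None \in F).
Proof.
move=> Hev; rewrite /excF big_split /= -big_distrr /= nisoE //.
rewrite (eq_bigr (fun i : 'I_k => #|SH F i.+1|)); last first.
  by move=> i _; apply: ncH => //; have := ltn_ord i; lia.
case: (boolP (None \in F)) => HN.
  have := nc1 Hev HN; set S1 := \sum_(i < k) #|SH F i.+1|; set S2 := \sum_(i < k) nisolated _ _; rewrite /=; lia.
by rewrite (nc0 Hev HN) !muln0 !addn0.
Qed.

Lemma consG : cons (mE Gc).
Proof. by move=> j Hj; rewrite esG // mEG_N. Qed.

Lemma restrG i : 1 <= i <= k -> restr i (mE Gc) = mE (Hb i).
Proof.
move=> Hi; apply/setIidPr/subsetP => -[f|] Hf; last exact: mEG_N.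
by apply: (blk_G Hi); rewrite -Hb_S.
Qed.

Lemma degGH i v : 1 <= i <= k -> v \in Bs i -> deg Gc v = deg (Hb i) v.
Proof.
move=> Hi Hv.
have := DEG (subxx (mE Gc)) consG Hi Hv; rewrite restrG //.
Qed.

Lemma nn2 : n_ Gc + n2_ Gc = \sum_(i < k) (n_ (Hb i.+1) + n2_ (Hb i.+1)).
Proof.
rewrite big_split /=; congr (_ + _).
  rewrite /n_ card_sumE (eq_bigr (fun v => (v \in mV Gc) * 1)); last by move=> v _; rewrite muln1.
  rewrite SUMV; apply: eq_bigr => i _; rewrite card_sumE.
  by apply: eq_bigr => v _; rewrite muln1.
rewrite /n2_ card_mul SUMV; apply: eq_bigr => i _.
have Hi : 1 <= i.+1 <= k by have := ltn_ord i; lia.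
rewrite card_mul; apply: eq_bigr => v _.
case Hv: (v \in Bs i.+1) => //.
by rewrite (degGH Hi Hv).
Qed.


Lemma degHC i v : 1 <= i <= k -> v \in Bs i -> deg (Hb i) v = deg C v.
Proof.
move=> Hi Hv; rewrite (degE0 (Hb i)) degE0 big_opt Hb_N mul1n.
rewrite (sum_dec (g := fun f => nat_of_bool (f \in mE C)) Hi Hv); last first.
  by move=> f /negPf ->.
have Hik : i <= k by lia. have Hik1 : i.-1 <= k by lia.
rewrite (es_mE Hik) (es_mE Hik1) !mul1n.
have -> : \sum_f (Some f \in mE (Hb i)) * cnt (Hb i) (Some f) v =
          \sum_f (f \in blk i) * (f \in mE C) * cnt C f v.
  apply: eq_bigr => f _; rewrite Hb_S; case Hb: (f \in blk i) => //.
  by move: Hb; rewrite blkE => /and4P [-> _ _ _].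
change (cnt (Hb i) None v) with ((xb i == v) + (yb i == v)).
set S := \sum_f _; lia.
Qed.

Lemma walk i z p : 1 <= i <= k -> z \in Bs i -> path (adj Cdel) z p ->
  exists2 T : {set option E}, T \subset [set Some f | f in blk i] &
    forall v, odd (deg (span_sub (Hb i) T) v) = (v == z) (+) (v == last z p).
Proof.
move=> Hi; have Hi' : i <= k.+1 by lia.
elim: p z => [|c p IH] z Hz /=.
  move=> _; exists set0; first exact: sub0set.
  by move=> v; rewrite addbb degE big1 // => o _; rewrite inE mul0n.
case/andP => Hzc Hp.
have Hc : c \in Bs i := Bclosed Hi' Hz (connect1 Hzc).
have [T HT HTo] := IH c Hc Hp.
have := Hzc; move/adjP => [f Hf Hm].
have Hm' : mends C f = (z, c) \/ mends C f = (c, z) := Hm.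
have Hfb : f \in blk i.
  move: Hf; rewrite /Cdel /= inE => /andP [Hnc HfC].
  by rewrite blkE HfC Hnc; case: Hm' => ->; rewrite /= ?Hz ?Hc.
exists (if Some f \in T then T :\ Some f else Some f |: T).
  case: ifP => _.
    exact: (subset_trans (subD1set T (Some f)) HT).
  apply/subsetP => o; rewrite in_setU1 => /orP [/eqP ->|/(subsetP HT) //].
  by apply/imsetP; exists f.
move=> v; rewrite deg_toggle HTo.
have -> : cnt (Hb i) (Some f) v = (z == v) + (c == v).
  by rewrite /cnt /=; case: Hm' => ->; rewrite //= addnC.
rewrite oddD !(eq_sym v).
by case: (z == v); case: (c == v); case: (last c p == v).
Qed.

Lemma EX1 i : 1 <= i <= k -> exists F, even_cover (Hb i) F && (None \in F).
Proof.
move=> Hi; have Hx := xb_B Hi; have Hy := yb_B Hi.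
have Hi' : i <= k.+1 by lia.
have : connect (adj Cdel) (xb i) (yb i).
  by move: Hy; rewrite (Bcls Hi' Hx) clsE => /andP [].
case/connectP => p Hp Hl.
have [T HT HTo] := walk Hi Hx Hp.
have HNT : None \notin T by apply/negP => /(subsetP HT) /imsetP [f _].
exists (None |: T); rewrite setU11 andbT.
apply: evI.
  apply/subsetP => o; rewrite in_setU1 => /orP [/eqP ->|/(subsetP HT) /imsetP [f Hf ->]].
    exact: Hb_N.
  by rewrite Hb_S.
move=> v Hv.
have Hod : ~~ odd (deg (span_sub (Hb i) (None |: T)) v).
  rewrite degE' big_setU1 // -degE' oddD HTo -Hl.
  change (cnt (Hb i) None v) with ((xb i == v) + (yb i == v)).
  rewrite oddD !(eq_sym v).
  by case: (xb i == v); case: (yb i == v).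
have Hle : deg (span_sub (Hb i) (None |: T)) v <= 3.
  apply: (leq_trans (deg_sub _ _ (F2 := mE (Hb i)) _)).
    apply/subsetP => o; rewrite in_setU1 => /orP [/eqP ->|/(subsetP HT) /imsetP [f Hf ->]].
      exact: Hb_N.
    by rewrite Hb_S.
  change (deg (Hb i) v <= 3); rewrite (degHC Hi Hv).
  have /forallP /(_ v) := subcC.
  by rewrite (subsetP (Bsub Hi') _ Hv).
move: Hod Hle; case: (deg _ v) => [|[|[|[|d]]]] //.
Qed.

Lemma EX0 i : exists F, even_cover (Hb i) F && (None \notin F).
Proof.
exists set0; rewrite inE andbT; apply: evI; first exact: sub0set.
by move=> v _; rewrite degE big1 // => o _; rewrite inE mul0n.
Qed.


Definition glue (b : bool) (Fs : nat -> {set option E}) : {set option E} :=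
  [set o | if o is Some f then
       (b && [exists j : 'I_k, (0 < j) && (f == es j)]) ||
       [exists i : 'I_k, (f \in blk i.+1) && (Some f \in Fs i.+1)]
     else b].

Lemma glueS b Fs f : (Some f \in glue b Fs) =
  (b && [exists j : 'I_k, (0 < j) && (f == es j)]) ||
  [exists i : 'I_k, (f \in blk i.+1) && (Some f \in Fs i.+1)].
Proof. by rewrite inE. Qed.

Lemma glueN b Fs : (None \in glue b Fs) = b.
Proof. by rewrite inE. Qed.

Lemma blk_disj i j f : 1 <= i <= k -> 1 <= j <= k -> f \in blk i -> f \in blk j -> i = j.
Proof.
move=> Hi Hj; rewrite !blkE => /and4P [_ _ h1 _] /and4P [_ _ h2 _].
by apply: (Bdisj (v := (mends C f).1)) => //; lia.
Qed.

Lemma glueP b Fs : (forall i, 1 <= i <= k -> even_cover (Hb i) (Fs i) /\ (None \in Fs i) = b) ->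
  [/\ even_cover Gc (glue b Fs), (None \in glue b Fs) = b &
      forall i, 1 <= i <= k -> restr i (glue b Fs) = Fs i].
Proof.
move=> HFs.
have Hres : forall i, 1 <= i <= k -> restr i (glue b Fs) = Fs i.
  move=> i Hi; have [Hev HN] := HFs i Hi; have [HsubF _] := evP Hev.
  apply/setP => -[f|]; rewrite /restr in_setI; last by rewrite glueN Hb_N andbT HN.
  rewrite Hb_S glueS.
  case Hbf: (f \in blk i); last first.
    rewrite andbF; symmetry; apply/negbTE/negP => H.
    by have := subsetP HsubF _ H; rewrite Hb_S Hbf.
  rewrite andbT.
  have -> : [exists j : 'I_k, (0 < j) && (f == es j)] = false.
    apply/negbTE/existsP => -[j /andP [_ /eqP Ef]]; move: Hbf.
    by rewrite Ef es_nblk //; have := ltn_ord j; lia.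
  rewrite andbF /=; apply/existsP/idP => [[j /andP [Hj1 Hj2]]|H].
    have Hj' : 1 <= j.+1 <= k by have := ltn_ord j; lia.
    by rewrite -(blk_disj Hj' Hi Hj1 Hbf).
  have [j Ej] := ord_blk Hi; exists j; by rewrite -Ej Hbf H.
have Hsub : glue b Fs \subset mE Gc.
  apply/subsetP => -[f|] Ho; last exact: mEG_N.
  move: Ho; rewrite glueS => /orP [/andP [_ /existsP [j /andP [Hj /eqP ->]]]|/existsP [i /andP [Hb _]]].
    by apply: esG; have := ltn_ord j; lia.
  by apply: (blk_G (i := i.+1)) => //; have := ltn_ord i; lia.
have Hcons : cons (glue b Fs).
  move=> j Hj; rewrite glueS glueN.
  have -> : [exists i : 'I_k, (es j \in blk i.+1) && (Some (es j) \in Fs i.+1)] = false.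
    apply/negbTE/existsP => -[i /andP [H _]].
    by rewrite es_nblk in H; lia.
  rewrite orbF; case: b {HFs Hres Hsub} => //=; apply/existsP.
  have Hjk : j < k by lia.
  by exists (Ordinal Hjk) => /=; rewrite eqxx andbT; lia.
split; [apply: evI => // v Hv | exact: glueN | exact: Hres].
have [i Hi Hvi] := mVG_B Hv.
rewrite (DEG Hsub Hcons Hi Hvi) (Hres i Hi).
have [Hev _] := HFs i Hi; have [_ Hd] := evP Hev; exact: Hd.
Qed.

Definition Pb' (T : finType) (b : bool) := fun F : {set option T} => (None \in F) == b.
Definition Pb (b : bool) := @Pb' E b.

Lemma MIN b : excmin Gc (Pb b) + 2 * k * b =
  \sum_(i < k) excmin (Hb i.+1) (Pb b) + 2 * b.
Proof.
have Hex : forall i, 1 <= i <= k -> exists F, even_cover (Hb i) F && Pb b F.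
  move=> i Hi; case: b.
    by have [F /andP [H1 H2]] := EX1 Hi; exists F; rewrite /Pb /Pb' H1 H2.
  by have [F /andP [H1 H2]] := EX0 i; exists F; rewrite /Pb /Pb' H1 (negPf H2).
pose Fs i := odflt set0 [pick F | even_cover (Hb i) F && Pb b F &&
                                  (excF (Hb i) F == excmin (Hb i) (Pb b))].
have HFs : forall i, 1 <= i <= k -> [/\ even_cover (Hb i) (Fs i), Pb b (Fs i) &
              excF (Hb i) (Fs i) = excmin (Hb i) (Pb b)].
  move=> i Hi; rewrite /Fs; case: pickP => [F /andP [/andP [H1 H2] /eqP H3]|Hn] //=.
  have [F0 /andP [H0 H0']] := Hex i Hi; have [F /andP [H H'] HE] := excmin_ex H0 H0'.
  by have := Hn F; rewrite H H' HE eqxx.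
have [Hg1 Hg2 Hg3] := @glueP b Fs (fun i Hi =>
  let: And3 h1 h2 _ := HFs i Hi in conj h1 (eqP h2)).
have Pg : Pb b (glue b Fs) by rewrite /Pb /Pb' Hg2.
apply/eqP; rewrite eqn_leq; apply/andP; split.
  apply: (@leq_trans (excF Gc (glue b Fs) + 2 * k * b)).
    by rewrite leq_add2r; apply: excmin_le.
  have := CORE Hg1; rewrite Hg2 => ->; rewrite leq_add2r.
  apply: leq_sum => i _; have Hi : 1 <= i.+1 <= k by have := ltn_ord i; lia.
  by rewrite (Hg3 _ Hi); have [_ _ ->] := HFs _ Hi.
have [F /andP [HF HPF] EF] := excmin_ex Hg1 Pg.
have HNF : (None \in F) = b by apply/eqP.
rewrite EF; have := CORE HF; rewrite HNF => ->; rewrite leq_add2r.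
apply: leq_sum => i _; have Hi : 1 <= i.+1 <= k by have := ltn_ord i; lia.
apply: excmin_le; first exact: restr_even.
by rewrite /Pb /Pb' /restr in_setI Hb_N andbT HNF.
Qed.


Local Open Scope ring_scope.

Lemma intrnat (m : nat) : ((m%:Z)%:~R : rat) = m%:R.
Proof. by []. Qed.

Lemma dsum_gen (T : finType) (G : mgraph V (option T)) :
  (delta G None + deltahat G None =
   ((excmin G (@Pb' T true))%:R - 2) + (excmin G (@Pb' T false))%:R
   - 2 * ((n_ G + n2_ G)%:R / 4%:R))%R.
Proof.
rewrite /delta /deltahat /exc_e /exchat_e intrB !intrnat.
rewrite (@eq_excmin _ _ G (fun F => None \in F) (@Pb' T true)); last first.
  by move=> F; rewrite /Pb' eqb_id.
rewrite (@eq_excmin _ _ G (fun F => None \notin F) (@Pb' T false)); last first.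
  by move=> F; rewrite /Pb' eqbF_neg.
set a := (n_ G + n2_ G)%:R / 4%:R; lra.
Qed.

Lemma closure_sum : closure_dsum C k x y es Bs = (\sum_(i < k) block_dsum C k es Bs i.+1)%R.
Proof.
have Hk : (k == 0) = false by case: k kpos.
rewrite /closure_dsum Hk /block_dsum.
rewrite (dsum_gen Gc).
rewrite (eq_bigr (fun i : 'I_k => ((excmin (Hb i.+1) (Pb true))%:R - 2) +
   (excmin (Hb i.+1) (Pb false))%:R - 2 * ((n_ (Hb i.+1) + n2_ (Hb i.+1))%:R / 4%:R))%R);
  last by move=> i _; rewrite (dsum_gen (Hb i.+1)).
have M1 := MIN true; have M0 := MIN false; have NN := nn2.
rewrite /= muln1 muln0 !addn0 in M1 M0.
have M1' : ((excmin Gc (Pb true))%:R + 2 * k%:R = \sum_(i < k) (excmin (Hb i.+1) (Pb true))%:R + 2 :> rat)%R.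
  by rewrite -natr_sum -(natrM _ 2) -!natrD M1.
have M0' : ((excmin Gc (Pb false))%:R = \sum_(i < k) (excmin (Hb i.+1) (Pb false))%:R :> rat)%R.
  by rewrite -natr_sum M0.
have NN' : ((n_ Gc + n2_ Gc)%:R = \sum_(i < k) (n_ (Hb i.+1) + n2_ (Hb i.+1))%:R :> rat)%R.
  by rewrite -natr_sum NN.
rewrite !big_split /= !sumrN -mulr_sumr -mulr_suml sumr_const card_ord -M0' -NN'.
rewrite -mulr_natr.
move: M1'; set SA := \sum_(i < k) _; set m1 := (excmin Gc _)%:R; set kk := k%:R.
move=> M1'; lra.
Qed.

End Chain.
Unset Implicit Arguments.
Local Open Scope ring_scope.

Theorem proposition2p3 (V E : finType) (C : mgraph V E) (k : nat) (x y : V)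
    (es : nat -> E) (Bs : nat -> {set V}) :
  subcubic_chain C k x y es Bs ->
  (forall i : nat, (1 <= i <= k)%N -> block_dsum C k es Bs i <= 0) ->
  closure_dsum C k x y es Bs <= 0 /\
  (closure_dsum C k x y es Bs = 0 <->
   (forall i : nat, (1 <= i <= k)%N -> block_dsum C k es Bs i = 0)).
Proof.
move=> Hch Hle.
case: (posnP k) => [Ek|kpos].
  have -> : closure_dsum C k x y es Bs = 0 by rewrite /closure_dsum Ek.
  split => //; split => // _ i; rewrite Ek => H; exfalso; lia.
rewrite (closure_sum Hch kpos).
have Hle' : forall i : 'I_k, block_dsum C k es Bs i.+1 <= 0.
  by move=> i; apply: Hle; have := ltn_ord i; lia.
split; first by apply: sumr_le0 => i _; exact: Hle'.
split => [H0 i Hi|H0]; last first.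
  apply: big1 => i _; apply: H0; have := ltn_ord i; lia.
have Hi' : (i.-1 < k)%N by lia.
have -> : i = (Ordinal Hi').+1 by rewrite /=; lia.
apply/eqP; rewrite -oppr_eq0; apply/eqP.
apply: (@psumr_eq0P _ _ predT (fun j : 'I_k => - block_dsum C k es Bs j.+1)) => //.
  by move=> j _; rewrite oppr_ge0.
by rewrite sumrN H0 oppr0.
Qed.
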